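(* Let $s$ be an integer with $|s|\ge 3$, and let $F_s(t)= t^4 + (4s^3 - 4s^2 + 8s - 4)t^3 + (-6s^2 - 6)t^2 + 4t + 1$. Then $F_s$ has four real roots $r_1,r_2,r_3,r_4$ satisfying $$r_1=-4s^3+4s^2-8s+4-\tfrac32 s^{-1}-\tfrac32 s^{-2}+\theta_1 s^{-4},\quad 1\le\theta_1\le 2,$$ $$r_2=\frac{1+\sqrt3}{2}s^{-1}+\frac{3+\sqrt3}{6}s^{-2}-\frac{1}{3\sqrt3}s^{-3}+\theta_2 s^{-4},\quad -\tfrac32\le\theta_2\le-\tfrac12,$$ $$r_3=\tfrac12 s^{-1}+\tfrac12 s^{-2}-\theta_3 s^{-4},\quad 0\le\theta_3\le 1,$$ $$r_4=\frac{1-\sqrt3}{2}s^{-1}+\frac{3-\sqrt3}{6}s^{-2}+\frac{1}{3\sqrt3}s^{-3}+\theta_4 s^{-4},\quad -\tfrac12\le\theta_4\le\tfrac12,$$ for suitable real numbers $\theta_1,\theta_2,\theta_3,\theta_4$ (depending on $s$). *)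

(* Defs.v *)
From Stdlib Require Import Reals ZArith.
Open Scope R_scope.

Definition Fs (s t : R) : R :=
  t ^ 4 + (4 * s ^ 3 - 4 * s ^ 2 + 8 * s - 4) * t ^ 3
  + (- 6 * s ^ 2 - 6) * t ^ 2 + 4 * t + 1.

(* Main.v *)
Require Import Defs.
From Stdlib Require Import Reals ZArith Lra Lia Psatz.
Open Scope R_scope.

Definition e1 (x th : R) := - 4 * x ^ 3 + 4 * x ^ 2 - 8 * x + 4 - 3 / 2 * / x - 3 / 2 * / x ^ 2 + th * / x ^ 4.
Definition e2 (x w th : R) := (1 + w) / 2 * / x + (3 + w) / 6 * / x ^ 2 - w / 9 * / x ^ 3 + th * / x ^ 4.
Definition e3 (x th : R) := 1 / 2 * / x + 1 / 2 * / x ^ 2 - th * / x ^ 4.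
Definition e4 (x w th : R) := (1 - w) / 2 * / x + (3 - w) / 6 * / x ^ 2 + w / 9 * / x ^ 3 + th * / x ^ 4.

Lemma hstep (c u r : R) : 0 < c -> 0 <= u -> 0 < r -> 0 < c + u * r.
Proof. intros; nra. Qed.

Ltac hp := first [ match goal with |- 0 < ?c + ?u * ?r => apply (hstep c u r); [lra | lra | hp] end | lra ].
Lemma sg_1_0_p (u w : R) (hu : 0 <= u) (hw2 : w * w = 3)
  (hwl : 17320508/10000000 < w) (hwu : w < 17320509/10000000) :
  let x := 3 + u in 0 < x^16 * Fs x (e1 x (1)).
Proof.
  intro x.
  assert (hx : x <> 0) by (unfold x; lra).
  assert (E : x^16 * Fs x (e1 x (1)) = (((215303415526)) + u * (((1521762177582)) + u * (((10255453466667/2)) + u * (((10955909606655)) + u * (((266436328445409/16)) + u * (((38293161359505/2)) + u * (((69149242539957/4)) + u * (((12557883715827)) + u * (((59671350618771/8)) + u * (((3661158442578)) + u * (((5978805582279/4)) + u * (((509110362198)) + u * (((2314719252641/16)) + u * (((68380109439/2)) + u * (((6676365132)) + u * (((1065759424)) + u * (((136839308)) + u * (((13792096)) + u * (((1051136)) + u * (((56960)) + u * (((1956)) + u * ((32))))))))))))))))))))))) + (w * w - 3) * (0)).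
  { unfold x, Fs, e1, e2, e3, e4. field; unfold x in hx; lra. }
  assert (P : 0 < (((215303415526)) + u * (((1521762177582)) + u * (((10255453466667/2)) + u * (((10955909606655)) + u * (((266436328445409/16)) + u * (((38293161359505/2)) + u * (((69149242539957/4)) + u * (((12557883715827)) + u * (((59671350618771/8)) + u * (((3661158442578)) + u * (((5978805582279/4)) + u * (((509110362198)) + u * (((2314719252641/16)) + u * (((68380109439/2)) + u * (((6676365132)) + u * (((1065759424)) + u * (((136839308)) + u * (((13792096)) + u * (((1051136)) + u * (((56960)) + u * (((1956)) + u * ((32)))))))))))))))))))))))) by (clear E hx; clearbody x; clear x; hp).
  rewrite E, hw2, Rminus_diag, Rmult_0_l, Rplus_0_r. exact P.
Qed.

Lemma sg_1_0_n (u w : R) (hu : 0 <= u) (hw2 : w * w = 3)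
  (hwl : 17320508/10000000 < w) (hwu : w < 17320509/10000000) :
  let x := - (3 + u) in 0 < - (x^16 * Fs x (e1 x (1))).
Proof.
  intro x.
  assert (hx : x <> 0) by (unfold x; lra).
  assert (E : - (x^16 * Fs x (e1 x (1))) = (((512052135839)) + u * (((3639719491938)) + u * (((12210195048135)) + u * (((51512487582579/2)) + u * (((614037724933407/16)) + u * (((85995066003423/2)) + u * (((150535575464379/4)) + u * (((26382607462689)) + u * (((120509067578685/8)) + u * (((7083431418399)) + u * (((11048828812215/4)) + u * (((1792625350923/2)) + u * (((3873527614447/16)) + u * (((108553886367/2)) + u * (((10037599668)) + u * (((1515311680)) + u * (((183776884)) + u * (((17479648)) + u * (((1256224)) + u * (((64160)) + u * (((2076)) + u * ((32))))))))))))))))))))))) + (w * w - 3) * (0)).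
  { unfold x, Fs, e1, e2, e3, e4. field; unfold x in hx; lra. }
  assert (P : 0 < (((512052135839)) + u * (((3639719491938)) + u * (((12210195048135)) + u * (((51512487582579/2)) + u * (((614037724933407/16)) + u * (((85995066003423/2)) + u * (((150535575464379/4)) + u * (((26382607462689)) + u * (((120509067578685/8)) + u * (((7083431418399)) + u * (((11048828812215/4)) + u * (((1792625350923/2)) + u * (((3873527614447/16)) + u * (((108553886367/2)) + u * (((10037599668)) + u * (((1515311680)) + u * (((183776884)) + u * (((17479648)) + u * (((1256224)) + u * (((64160)) + u * (((2076)) + u * ((32)))))))))))))))))))))))) by (clear E hx; clearbody x; clear x; hp).
  rewrite E, hw2, Rminus_diag, Rmult_0_l, Rplus_0_r. exact P.
Qed.

Lemma sg_1_1_p (u w : R) (hu : 0 <= u) (hw2 : w * w = 3)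
  (hwl : 17320508/10000000 < w) (hwu : w < 17320509/10000000) :
  let x := 3 + u in 0 < - (x^16 * Fs x (e1 x (2))).
Proof.
  intro x.
  assert (hx : x <> 0) by (unfold x; lra).
  assert (E : - (x^16 * Fs x (e1 x (2))) = (((210290861567)) + u * (((1440893767590)) + u * (((4720009010979)) + u * (((19663797130611/2)) + u * (((233784712255359/16)) + u * (((16475467885833)) + u * (((58529898006897/4)) + u * (((20976458314647/2)) + u * (((49332297576021/8)) + u * (((6011898022203/2)) + u * (((4891324408485/4)) + u * (((416444623623)) + u * (((1899736185503/16)) + u * (((56509496895/2)) + u * (((5575765140)) + u * (((902816800)) + u * (((118020148)) + u * (((12157184)) + u * (((950592)) + u * (((53056)) + u * (((1884)) + u * ((32))))))))))))))))))))))) + (w * w - 3) * (0)).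
  { unfold x, Fs, e1, e2, e3, e4. field; unfold x in hx; lra. }
  assert (P : 0 < (((210290861567)) + u * (((1440893767590)) + u * (((4720009010979)) + u * (((19663797130611/2)) + u * (((233784712255359/16)) + u * (((16475467885833)) + u * (((58529898006897/4)) + u * (((20976458314647/2)) + u * (((49332297576021/8)) + u * (((6011898022203/2)) + u * (((4891324408485/4)) + u * (((416444623623)) + u * (((1899736185503/16)) + u * (((56509496895/2)) + u * (((5575765140)) + u * (((902816800)) + u * (((118020148)) + u * (((12157184)) + u * (((950592)) + u * (((53056)) + u * (((1884)) + u * ((32)))))))))))))))))))))))) by (clear E hx; clearbody x; clear x; hp).
  rewrite E, hw2, Rminus_diag, Rmult_0_l, Rplus_0_r. exact P.
Qed.

Lemma sg_1_1_n (u w : R) (hu : 0 <= u) (hw2 : w * w = 3)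
  (hwl : 17320508/10000000 < w) (hwu : w < 17320509/10000000) :
  let x := - (3 + u) in 0 < x^16 * Fs x (e1 x (2)).
Proof.
  intro x.
  assert (hx : x <> 0) by (unfold x; lra).
  assert (E : x^16 * Fs x (e1 x (2)) = (((2214461658814)) + u * (((13900619627226)) + u * (((83201716749747/2)) + u * (((78952728057843)) + u * (((1705850838702321/16)) + u * (((108942225737070)) + u * (((349802732942115/4)) + u * (((113014673081355/2)) + u * (((238990500955875/8)) + u * (((26122737002289/2)) + u * (((19016361521157/4)) + u * (((2890326708351/2)) + u * (((5870966554609/16)) + u * (((155178031647/2)) + u * (((13576409388)) + u * (((1945270432)) + u * (((224605196)) + u * (((20399744)) + u * (((1404192)) + u * (((68896)) + u * (((2148)) + u * ((32))))))))))))))))))))))) + (w * w - 3) * (0)).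
  { unfold x, Fs, e1, e2, e3, e4. field; unfold x in hx; lra. }
  assert (P : 0 < (((2214461658814)) + u * (((13900619627226)) + u * (((83201716749747/2)) + u * (((78952728057843)) + u * (((1705850838702321/16)) + u * (((108942225737070)) + u * (((349802732942115/4)) + u * (((113014673081355/2)) + u * (((238990500955875/8)) + u * (((26122737002289/2)) + u * (((19016361521157/4)) + u * (((2890326708351/2)) + u * (((5870966554609/16)) + u * (((155178031647/2)) + u * (((13576409388)) + u * (((1945270432)) + u * (((224605196)) + u * (((20399744)) + u * (((1404192)) + u * (((68896)) + u * (((2148)) + u * ((32)))))))))))))))))))))))) by (clear E hx; clearbody x; clear x; hp).
  rewrite E, hw2, Rminus_diag, Rmult_0_l, Rplus_0_r. exact P.
Qed.

Lemma sg_2_0_p (u w : R) (hu : 0 <= u) (hw2 : w * w = 3)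
  (hwl : 17320508/10000000 < w) (hwu : w < 17320509/10000000) :
  let x := 3 + u in 0 < - (x^16 * Fs x (e2 x w (-3/2))).
Proof.
  intro x.
  assert (hx : x <> 0) by (unfold x; lra).
  assert (E : - (x^16 * Fs x (e2 x w (-3/2))) = (((1443930815/144) + (-4003538/3)*w) + u * (((4602398393/108) + (-66263539/12)*w) + u * (((2262649306/27) + (-42608319/4)*w) + u * (((98143388993/972) + (-4106232443/324)*w) + u * (((242514900671/2916) + (-839702663/81)*w) + u * (((12017328914/243) + (-2989183181/486)*w) + u * (((3538411777/162) + (-2644335661/972)*w) + u * (((391761961/54) + (-220517029/243)*w) + u * (((32619697/18) + (-55422793/243)*w) + u * (((6051989/18) + (-20713295/486)*w) + u * (((135098/3) + (-2794807/486)*w) + u * (((4123) + (-14312/27)*w) + u * (((925/4) + (-269/9)*w) + u * ((6) + (-7/9)*w)))))))))))))) + (w * w - 3) * ((130721624/27) + (-213471104/9)*w^1 + (-3748096/81)*w^2 + (1672783574/81)*u^1 + (-1123884784/9)*u^1*w^1 + (-44125312/243)*u^1*w^2 + (26408645897/648)*u^2 + (-308461802)*u^2*w^1 + (-79245320/243)*u^2*w^2 + (143668488377/2916)*u^3 + (-461260930079/972)*u^3*w^1 + (-775103890/2187)*u^3*w^2 + (1424623193993/34992)*u^4 + (-494675791835/972)*u^4*w^1 + (-27251106001/104976)*u^4*w^2 + (70811978957/2916)*u^5 + (-1176425026651/2916)*u^5*w^1 + (-295251775/2187)*u^5*w^2 + (20910986005/1944)*u^6 + (-356537732897/1458)*u^6*w^1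 + (-149049619/2916)*u^6*w^2 + (1160778425/324)*u^7 + (-337117384903/2916)*u^7*w^1 + (-3449635/243)*u^7*w^2 + (193796371/216)*u^8 + (-62813639675/1458)*u^8*w^1 + (-1859963/648)*u^8*w^2 + (18020065/108)*u^9 + (-37023615787/2916)*u^9*w^1 + (-11125/27)*u^9*w^2 + (806255/36)*u^10 + (-4300113025/1458)*u^10*w^1 + (-1435/36)*u^10*w^2 + (4109/2)*u^11 + (-43278374/81)*u^11*w^1 + (-7/3)*u^11*w^2 + (1847/16)*u^12 + (-7992077/108)*u^12*w^1 + (-1/16)*u^12*w^2 + (3)*u^13 + (-409021/54)*u^13*w^1 + (-1621/3)*u^14*w^1 + (-24)*u^15*w^1 + (-1/2)*u^16*w^1)).
  { unfold x, Fs, e1, e2, e3, e4. field; unfold x in hx; lra. }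
  assert (P : 0 < (((1443930815/144) + (-4003538/3)*w) + u * (((4602398393/108) + (-66263539/12)*w) + u * (((2262649306/27) + (-42608319/4)*w) + u * (((98143388993/972) + (-4106232443/324)*w) + u * (((242514900671/2916) + (-839702663/81)*w) + u * (((12017328914/243) + (-2989183181/486)*w) + u * (((3538411777/162) + (-2644335661/972)*w) + u * (((391761961/54) + (-220517029/243)*w) + u * (((32619697/18) + (-55422793/243)*w) + u * (((6051989/18) + (-20713295/486)*w) + u * (((135098/3) + (-2794807/486)*w) + u * (((4123) + (-14312/27)*w) + u * (((925/4) + (-269/9)*w) + u * ((6) + (-7/9)*w))))))))))))))) by (clear E hx; clearbody x; clear x; hp).
  rewrite E, hw2, Rminus_diag, Rmult_0_l, Rplus_0_r. exact P.
Qed.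

Lemma sg_2_0_n (u w : R) (hu : 0 <= u) (hw2 : w * w = 3)
  (hwl : 17320508/10000000 < w) (hwu : w < 17320509/10000000) :
  let x := - (3 + u) in 0 < x^16 * Fs x (e2 x w (-3/2)).
Proof.
  intro x.
  assert (hx : x <> 0) by (unfold x; lra).
  assert (E : x^16 * Fs x (e2 x w (-3/2)) = (((1779561961/144) + (-5175415/6)*w) + u * (((5657091973/108) + (-52844899/12)*w) + u * (((5530937569/54) + (-39171575/4)*w) + u * (((118930063273/972) + (-4156003883/324)*w) + u * (((290575850377/2916) + (-904934537/81)*w) + u * (((14201346278/243) + (-3344886347/486)*w) + u * (((4114840733/162) + (-3013618907/972)*w) + u * (((447438409/54) + (-252151693/243)*w) + u * (((36528005/18) + (-62857430/243)*w) + u * (((6635549/18) + (-23098955/486)*w) + u * (((144874/3) + (-3045401/486)*w) + u * (((4321) + (-15176/27)*w) + u * (((947/4) + (-277/9)*w) + u * ((6) + (-7/9)*w)))))))))))))) + (w * w - 3) * ((340068575/54) + (199711750/9)*w^1 + (1500625/81)*w^2 + (4315411835/162)*u^1 + (1064374325/9)*u^1*w^1 + (19122250/243)*u^1*w^2 + (33686969671/648)*u^2 + (1771648865/6)*u^2*w^1 + (74295025/486)*u^2*w^2 + (180764535823/2916)*u^3 + (445649722513/972)*u^3*w^1 + (785564045/4374)*u^3*w^2 + (1763788187527/34992)*u^4 + (481717438285/972)*u^4*w^1 + (14919636481/104976)*u^4*w^2 + (86080009427/2916)*u^5 + (1153195505441/2916)*u^5*w^1 + (174547118/2187)*u^5*w^2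 + (24910098359/1944)*u^6 + (175698273271/729)*u^6*w^1 + (95099443/2916)*u^6*w^2 + (1352749649/324)*u^7 + (333703022633/2916)*u^7*w^1 + (2374355/243)*u^7*w^2 + (220623065/216)*u^8 + (31194151975/729)*u^8*w^1 + (1380443/648)*u^8*w^2 + (20016085/108)*u^9 + (36866537837/2916)*u^9*w^1 + (8900/27)*u^9*w^2 + (872983/36)*u^10 + (4289664565/1458)*u^10*w^1 + (1237/36)*u^10*w^2 + (2167)*u^11 + (43225684/81)*u^11*w^1 + (13/6)*u^11*w^2 + (1897/16)*u^12 + (7988177/108)*u^12*w^1 + (1/16)*u^12*w^2 + (3)*u^13 + (408971/54)*u^13*w^1 + (1621/3)*u^14*w^1 + (24)*u^15*w^1 + (1/2)*u^16*w^1)).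
  { unfold x, Fs, e1, e2, e3, e4. field; unfold x in hx; lra. }
  assert (P : 0 < (((1779561961/144) + (-5175415/6)*w) + u * (((5657091973/108) + (-52844899/12)*w) + u * (((5530937569/54) + (-39171575/4)*w) + u * (((118930063273/972) + (-4156003883/324)*w) + u * (((290575850377/2916) + (-904934537/81)*w) + u * (((14201346278/243) + (-3344886347/486)*w) + u * (((4114840733/162) + (-3013618907/972)*w) + u * (((447438409/54) + (-252151693/243)*w) + u * (((36528005/18) + (-62857430/243)*w) + u * (((6635549/18) + (-23098955/486)*w) + u * (((144874/3) + (-3045401/486)*w) + u * (((4321) + (-15176/27)*w) + u * (((947/4) + (-277/9)*w) + u * ((6) + (-7/9)*w))))))))))))))) by (clear E hx; clearbody x; clear x; hp).
  rewrite E, hw2, Rminus_diag, Rmult_0_l, Rplus_0_r. exact P.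
Qed.

Lemma sg_2_1_p (u w : R) (hu : 0 <= u) (hw2 : w * w = 3)
  (hwl : 17320508/10000000 < w) (hwu : w < 17320509/10000000) :
  let x := 3 + u in 0 < x^16 * Fs x (e2 x w (-1/2)).
Proof.
  intro x.
  assert (hx : x <> 0) by (unfold x; lra).
  assert (E : x^16 * Fs x (e2 x w (-1/2)) = (((-35256575/144) + (9216746/9)*w) + u * (((-85256615/108) + (162065095/36)*w) + u * (((-29505913/27) + (986500541/108)*w) + u * (((-789252635/972) + (11009904875/972)*w) + u * (((-875059475/2916) + (775812461/81)*w) + u * (((2159080/243) + (2834242547/486)*w) + u * (((11476655/162) + (2556818293/972)*w) + u * (((2158727/54) + (216253918/243)*w) + u * (((25071/2) + (54874423/243)*w) + u * (((14959/6) + (20629217/486)*w) + u * (((314) + (2791891/486)*w) + u * (((23) + (14312/27)*w) + u * (((3/4) + (269/9)*w) + u * ((0) + (7/9)*w)))))))))))))) + (w * w - 3) * ((306856/27) + (640754048/27)*w^1 + (3748096/81)*w^2 + (10853194/81)*u^1 + (3372657200/27)*u^1*w^1 + (44125312/243)*u^1*w^2 + (265198327/648)*u^2 + (24989333270/81)*u^2*w^1 + (79245320/243)*u^2*w^2 + (1862302129/2916)*u^3 + (1383890224787/2916)*u^3*w^1 + (775103890/2187)*u^3*w^2 + (21658901479/34992)*u^4 + (494693248547/972)*u^4*w^1 + (27251106001/104976)*u^4*w^2 + (1184022217/2916)*u^5 + (1176442009057/2916)*u^5*w^1 + (295251775/2187)*u^5*w^2 + (365423027/1944)*u^6 + (356539564577/1458)*u^6*w^1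 + (149049619/2916)*u^6*w^2 + (20236681/324)*u^7 + (337117891801/2916)*u^7*w^1 + (3449635/243)*u^7*w^2 + (356845/24)*u^8 + (62813660087/1458)*u^8*w^1 + (1859963/648)*u^8*w^2 + (89363/36)*u^9 + (37023617245/2916)*u^9*w^1 + (11125/27)*u^9*w^2 + (3319/12)*u^10 + (4300113025/1458)*u^10*w^1 + (1435/36)*u^10*w^2 + (37/2)*u^11 + (43278374/81)*u^11*w^1 + (7/3)*u^11*w^2 + (9/16)*u^12 + (7992077/108)*u^12*w^1 + (1/16)*u^12*w^2 + (409021/54)*u^13*w^1 + (1621/3)*u^14*w^1 + (24)*u^15*w^1 + (1/2)*u^16*w^1)).
  { unfold x, Fs, e1, e2, e3, e4. field; unfold x in hx; lra. }
  assert (P : 0 < (((-35256575/144) + (9216746/9)*w) + u * (((-85256615/108) + (162065095/36)*w) + u * (((-29505913/27) + (986500541/108)*w) + u * (((-789252635/972) + (11009904875/972)*w) + u * (((-875059475/2916) + (775812461/81)*w) + u * (((2159080/243) + (2834242547/486)*w) + u * (((11476655/162) + (2556818293/972)*w) + u * (((2158727/54) + (216253918/243)*w) + u * (((25071/2) + (54874423/243)*w) + u * (((14959/6) + (20629217/486)*w) + u * (((314) + (2791891/486)*w) + u * (((23) + (14312/27)*w) + u * (((3/4) + (269/9)*w) + u * ((0) + (7/9)*w))))))))))))))) by (clear E hx; clearbody x; clear x; hp).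
  rewrite E, hw2, Rminus_diag, Rmult_0_l, Rplus_0_r. exact P.
Qed.

Lemma sg_2_1_n (u w : R) (hu : 0 <= u) (hw2 : w * w = 3)
  (hwl : 17320508/10000000 < w) (hwu : w < 17320509/10000000) :
  let x := - (3 + u) in 0 < - (x^16 * Fs x (e2 x w (-1/2))).
Proof.
  intro x.
  assert (hx : x <> 0) by (unfold x; lra).
  assert (E : - (x^16 * Fs x (e2 x w (-1/2))) = (((-151810585/144) + (26327455/18)*w) + u * (((-437230555/108) + (226310623/36)*w) + u * (((-382577005/54) + (1344755945/108)*w) + u * (((-7260354979/972) + (14632095707/972)*w) + u * (((-15404150821/2916) + (1004182481/81)*w) + u * (((-641331596/243) + (3570054089/486)*w) + u * (((-154657133/162) + (3132176123/972)*w) + u * (((-13595449/54) + (257519158/243)*w) + u * (((-96009/2) + (63497654/243)*w) + u * (((-38681/6) + (23189837/486)*w) + u * (((-578) + (3048317/486)*w) + u * (((-31) + (15176/27)*w) + u * (((-3/4) + (277/9)*w) + u * ((0) + (7/9)*w)))))))))))))) + (w * w - 3) * ((-31985975/54) + (-598963750/27)*w^1 + (-1500625/81)*w^2 + (-370763855/162)*u^1 + (-3192576625/27)*u^1*w^1 + (-19122250/243)*u^1*w^2 + (-2616659743/648)*u^2 + (-47829891725/162)*u^2*w^1 + (-74295025/486)*u^2*w^2 + (-12543876277/2916)*u^3 + (-1336880774125/2916)*u^3*w^1 + (-785564045/4374)*u^3*w^2 + (-107826230023/34992)*u^4 + (-481705439401/972)*u^4*w^1 + (-14919636481/104976)*u^4*w^2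 + (-4559222789/2916)*u^5 + (-1153182910643/2916)*u^5*w^1 + (-174547118/2187)*u^5*w^2 + (-1120022663/1944)*u^6 + (-175697540842/729)*u^6*w^1 + (-95099443/2916)*u^6*w^2 + (-50327279/324)*u^7 + (-333702585719/2916)*u^7*w^1 + (-2374355/243)*u^7*w^2 + (-729697/24)*u^8 + (-31194142498/729)*u^8*w^1 + (-1380443/648)*u^8*w^2 + (-151657/36)*u^9 + (-36866536379/2916)*u^9*w^1 + (-8900/27)*u^9*w^2 + (-4705/12)*u^10 + (-4289664565/1458)*u^10*w^1 + (-1237/36)*u^10*w^2 + (-22)*u^11 + (-43225684/81)*u^11*w^1 + (-13/6)*u^11*w^2 + (-9/16)*u^12 + (-7988177/108)*u^12*w^1 + (-1/16)*u^12*w^2 + (-408971/54)*u^13*w^1 + (-1621/3)*u^14*w^1 + (-24)*u^15*w^1 + (-1/2)*u^16*w^1)).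
  { unfold x, Fs, e1, e2, e3, e4. field; unfold x in hx; lra. }
  assert (P : 0 < (((-151810585/144) + (26327455/18)*w) + u * (((-437230555/108) + (226310623/36)*w) + u * (((-382577005/54) + (1344755945/108)*w) + u * (((-7260354979/972) + (14632095707/972)*w) + u * (((-15404150821/2916) + (1004182481/81)*w) + u * (((-641331596/243) + (3570054089/486)*w) + u * (((-154657133/162) + (3132176123/972)*w) + u * (((-13595449/54) + (257519158/243)*w) + u * (((-96009/2) + (63497654/243)*w) + u * (((-38681/6) + (23189837/486)*w) + u * (((-578) + (3048317/486)*w) + u * (((-31) + (15176/27)*w) + u * (((-3/4) + (277/9)*w) + u * ((0) + (7/9)*w))))))))))))))) by (clear E hx; clearbody x; clear x; hp).
  rewrite E, hw2, Rminus_diag, Rmult_0_l, Rplus_0_r. exact P.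
Qed.

Lemma sg_3_0_p (u w : R) (hu : 0 <= u) (hw2 : w * w = 3)
  (hwl : 17320508/10000000 < w) (hwu : w < 17320509/10000000) :
  let x := 3 + u in 0 < - (x^16 * Fs x (e3 x (0))).
Proof.
  intro x.
  assert (hx : x <> 0) by (unfold x; lra).
  assert (E : - (x^16 * Fs x (e3 x (0))) = (((2670327)) + u * (((11464254)) + u * (((22717827)) + u * (((55027593/2)) + u * (((363559023/16)) + u * (((13513014)) + u * (((23814585/4)) + u * (((3935301/2)) + u * (((3902485/8)) + u * (((179197/2)) + u * (((47405/4)) + u * (((1069)) + u * (((943/16)) + u * ((3/2))))))))))))))) + (w * w - 3) * (0)).
  { unfold x, Fs, e1, e2, e3, e4. field; unfold x in hx; lra. }
  assert (P : 0 < (((2670327)) + u * (((11464254)) + u * (((22717827)) + u * (((55027593/2)) + u * (((363559023/16)) + u * (((13513014)) + u * (((23814585/4)) + u * (((3935301/2)) + u * (((3902485/8)) + u * (((179197/2)) + u * (((47405/4)) + u * (((1069)) + u * (((943/16)) + u * ((3/2)))))))))))))))) by (clear E hx; clearbody x; clear x; hp).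
  rewrite E, hw2, Rminus_diag, Rmult_0_l, Rplus_0_r. exact P.
Qed.

Lemma sg_3_0_n (u w : R) (hu : 0 <= u) (hw2 : w * w = 3)
  (hwl : 17320508/10000000 < w) (hwu : w < 17320509/10000000) :
  let x := - (3 + u) in 0 < x^16 * Fs x (e3 x (0)).
Proof.
  intro x.
  assert (hx : x <> 0) by (unfold x; lra).
  assert (E : x^16 * Fs x (e3 x (0)) = (((2191374)) + u * (((9557190)) + u * (((38472975/2)) + u * (((23660910)) + u * (((317490273/16)) + u * (((11982303)) + u * (((21440115/4)) + u * (((3596889/2)) + u * (((3621011/8)) + u * (((168787/2)) + u * (((45325/4)) + u * (((2075/2)) + u * (((929/16)) + u * ((3/2))))))))))))))) + (w * w - 3) * (0)).
  { unfold x, Fs, e1, e2, e3, e4. field; unfold x in hx; lra. }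
  assert (P : 0 < (((2191374)) + u * (((9557190)) + u * (((38472975/2)) + u * (((23660910)) + u * (((317490273/16)) + u * (((11982303)) + u * (((21440115/4)) + u * (((3596889/2)) + u * (((3621011/8)) + u * (((168787/2)) + u * (((45325/4)) + u * (((2075/2)) + u * (((929/16)) + u * ((3/2)))))))))))))))) by (clear E hx; clearbody x; clear x; hp).
  rewrite E, hw2, Rminus_diag, Rmult_0_l, Rplus_0_r. exact P.
Qed.

Lemma sg_3_1_p (u w : R) (hu : 0 <= u) (hw2 : w * w = 3)
  (hwl : 17320508/10000000 < w) (hwu : w < 17320509/10000000) :
  let x := 3 + u in 0 < x^16 * Fs x (e3 x (1)).
Proof.
  intro x.
  assert (hx : x <> 0) by (unfold x; lra).
  assert (E : x^16 * Fs x (e3 x (1)) = (((2112166)) + u * (((9081114)) + u * (((36153095/2)) + u * (((22057966)) + u * (((294535921/16)) + u * (((22189067/2)) + u * (((19869941/4)) + u * (((1672850)) + u * (((3389363/8)) + u * (((79691)) + u * (((43279/4)) + u * (((1004)) + u * (((913/16)) + u * ((3/2))))))))))))))) + (w * w - 3) * (0)).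
  { unfold x, Fs, e1, e2, e3, e4. field; unfold x in hx; lra. }
  assert (P : 0 < (((2112166)) + u * (((9081114)) + u * (((36153095/2)) + u * (((22057966)) + u * (((294535921/16)) + u * (((22189067/2)) + u * (((19869941/4)) + u * (((1672850)) + u * (((3389363/8)) + u * (((79691)) + u * (((43279/4)) + u * (((1004)) + u * (((913/16)) + u * ((3/2)))))))))))))))) by (clear E hx; clearbody x; clear x; hp).
  rewrite E, hw2, Rminus_diag, Rmult_0_l, Rplus_0_r. exact P.
Qed.

Lemma sg_3_1_n (u w : R) (hu : 0 <= u) (hw2 : w * w = 3)
  (hwl : 17320508/10000000 < w) (hwu : w < 17320509/10000000) :
  let x := - (3 + u) in 0 < - (x^16 * Fs x (e3 x (1))).
Proof.
  intro x.
  assert (hx : x <> 0) by (unfold x; lra).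
  assert (E : - (x^16 * Fs x (e3 x (1))) = (((3634919)) + u * (((15188970)) + u * (((29292959)) + u * (((69062993/2)) + u * (((444262895/16)) + u * (((32169905/2)) + u * (((27630163/4)) + u * (((2226896)) + u * (((4312333/8)) + u * (((96776)) + u * (((50111/4)) + u * (((2215/2)) + u * (((959/16)) + u * ((3/2))))))))))))))) + (w * w - 3) * (0)).
  { unfold x, Fs, e1, e2, e3, e4. field; unfold x in hx; lra. }
  assert (P : 0 < (((3634919)) + u * (((15188970)) + u * (((29292959)) + u * (((69062993/2)) + u * (((444262895/16)) + u * (((32169905/2)) + u * (((27630163/4)) + u * (((2226896)) + u * (((4312333/8)) + u * (((96776)) + u * (((50111/4)) + u * (((2215/2)) + u * (((959/16)) + u * ((3/2)))))))))))))))) by (clear E hx; clearbody x; clear x; hp).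
  rewrite E, hw2, Rminus_diag, Rmult_0_l, Rplus_0_r. exact P.
Qed.

Lemma sg_4_0_p (u w : R) (hu : 0 <= u) (hw2 : w * w = 3)
  (hwl : 17320508/10000000 < w) (hwu : w < 17320509/10000000) :
  let x := 3 + u in 0 < - (x^16 * Fs x (e4 x w (-1/2))).
Proof.
  intro x.
  assert (hx : x <> 0) by (unfold x; lra).
  assert (E : - (x^16 * Fs x (e4 x w (-1/2))) = (((35256575/144) + (9216746/9)*w) + u * (((85256615/108) + (162065095/36)*w) + u * (((29505913/27) + (986500541/108)*w) + u * (((789252635/972) + (11009904875/972)*w) + u * (((875059475/2916) + (775812461/81)*w) + u * (((-2159080/243) + (2834242547/486)*w) + u * (((-11476655/162) + (2556818293/972)*w) + u * (((-2158727/54) + (216253918/243)*w) + u * (((-25071/2) + (54874423/243)*w) + u * (((-14959/6) + (20629217/486)*w) + u * (((-314) + (2791891/486)*w) + u * (((-23) + (14312/27)*w) + u * (((-3/4) + (269/9)*w) + u * ((0) + (7/9)*w)))))))))))))) + (w * w - 3) * ((-306856/27) + (640754048/27)*w^1 + (-3748096/81)*w^2 + (-10853194/81)*u^1 + (3372657200/27)*u^1*w^1 + (-44125312/243)*u^1*w^2 + (-265198327/648)*u^2 + (24989333270/81)*u^2*w^1 + (-79245320/243)*u^2*w^2 + (-1862302129/2916)*u^3 + (1383890224787/2916)*u^3*w^1 + (-775103890/2187)*u^3*w^2 + (-21658901479/34992)*u^4 + (494693248547/972)*u^4*w^1 + (-27251106001/104976)*u^4*w^2 + (-1184022217/2916)*u^5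 + (1176442009057/2916)*u^5*w^1 + (-295251775/2187)*u^5*w^2 + (-365423027/1944)*u^6 + (356539564577/1458)*u^6*w^1 + (-149049619/2916)*u^6*w^2 + (-20236681/324)*u^7 + (337117891801/2916)*u^7*w^1 + (-3449635/243)*u^7*w^2 + (-356845/24)*u^8 + (62813660087/1458)*u^8*w^1 + (-1859963/648)*u^8*w^2 + (-89363/36)*u^9 + (37023617245/2916)*u^9*w^1 + (-11125/27)*u^9*w^2 + (-3319/12)*u^10 + (4300113025/1458)*u^10*w^1 + (-1435/36)*u^10*w^2 + (-37/2)*u^11 + (43278374/81)*u^11*w^1 + (-7/3)*u^11*w^2 + (-9/16)*u^12 + (7992077/108)*u^12*w^1 + (-1/16)*u^12*w^2 + (409021/54)*u^13*w^1 + (1621/3)*u^14*w^1 + (24)*u^15*w^1 + (1/2)*u^16*w^1)).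
  { unfold x, Fs, e1, e2, e3, e4. field; unfold x in hx; lra. }
  assert (P : 0 < (((35256575/144) + (9216746/9)*w) + u * (((85256615/108) + (162065095/36)*w) + u * (((29505913/27) + (986500541/108)*w) + u * (((789252635/972) + (11009904875/972)*w) + u * (((875059475/2916) + (775812461/81)*w) + u * (((-2159080/243) + (2834242547/486)*w) + u * (((-11476655/162) + (2556818293/972)*w) + u * (((-2158727/54) + (216253918/243)*w) + u * (((-25071/2) + (54874423/243)*w) + u * (((-14959/6) + (20629217/486)*w) + u * (((-314) + (2791891/486)*w) + u * (((-23) + (14312/27)*w) + u * (((-3/4) + (269/9)*w) + u * ((0) + (7/9)*w))))))))))))))) by (clear E hx; clearbody x; clear x; hp).
  rewrite E, hw2, Rminus_diag, Rmult_0_l, Rplus_0_r. exact P.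
Qed.

Lemma sg_4_0_n (u w : R) (hu : 0 <= u) (hw2 : w * w = 3)
  (hwl : 17320508/10000000 < w) (hwu : w < 17320509/10000000) :
  let x := - (3 + u) in 0 < x^16 * Fs x (e4 x w (-1/2)).
Proof.
  intro x.
  assert (hx : x <> 0) by (unfold x; lra).
  assert (E : x^16 * Fs x (e4 x w (-1/2)) = (((151810585/144) + (26327455/18)*w) + u * (((437230555/108) + (226310623/36)*w) + u * (((382577005/54) + (1344755945/108)*w) + u * (((7260354979/972) + (14632095707/972)*w) + u * (((15404150821/2916) + (1004182481/81)*w) + u * (((641331596/243) + (3570054089/486)*w) + u * (((154657133/162) + (3132176123/972)*w) + u * (((13595449/54) + (257519158/243)*w) + u * (((96009/2) + (63497654/243)*w) + u * (((38681/6) + (23189837/486)*w) + u * (((578) + (3048317/486)*w) + u * (((31) + (15176/27)*w) + u * (((3/4) + (277/9)*w) + u * ((0) + (7/9)*w)))))))))))))) + (w * w - 3) * ((31985975/54) + (-598963750/27)*w^1 + (1500625/81)*w^2 + (370763855/162)*u^1 + (-3192576625/27)*u^1*w^1 + (19122250/243)*u^1*w^2 + (2616659743/648)*u^2 + (-47829891725/162)*u^2*w^1 + (74295025/486)*u^2*w^2 + (12543876277/2916)*u^3 + (-1336880774125/2916)*u^3*w^1 + (785564045/4374)*u^3*w^2 + (107826230023/34992)*u^4 + (-481705439401/972)*u^4*w^1 + (14919636481/104976)*u^4*w^2 + (4559222789/2916)*u^5 + (-1153182910643/2916)*u^5*w^1 + (174547118/2187)*u^5*w^2 + (1120022663/1944)*u^6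 + (-175697540842/729)*u^6*w^1 + (95099443/2916)*u^6*w^2 + (50327279/324)*u^7 + (-333702585719/2916)*u^7*w^1 + (2374355/243)*u^7*w^2 + (729697/24)*u^8 + (-31194142498/729)*u^8*w^1 + (1380443/648)*u^8*w^2 + (151657/36)*u^9 + (-36866536379/2916)*u^9*w^1 + (8900/27)*u^9*w^2 + (4705/12)*u^10 + (-4289664565/1458)*u^10*w^1 + (1237/36)*u^10*w^2 + (22)*u^11 + (-43225684/81)*u^11*w^1 + (13/6)*u^11*w^2 + (9/16)*u^12 + (-7988177/108)*u^12*w^1 + (1/16)*u^12*w^2 + (-408971/54)*u^13*w^1 + (-1621/3)*u^14*w^1 + (-24)*u^15*w^1 + (-1/2)*u^16*w^1)).
  { unfold x, Fs, e1, e2, e3, e4. field; unfold x in hx; lra. }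
  assert (P : 0 < (((151810585/144) + (26327455/18)*w) + u * (((437230555/108) + (226310623/36)*w) + u * (((382577005/54) + (1344755945/108)*w) + u * (((7260354979/972) + (14632095707/972)*w) + u * (((15404150821/2916) + (1004182481/81)*w) + u * (((641331596/243) + (3570054089/486)*w) + u * (((154657133/162) + (3132176123/972)*w) + u * (((13595449/54) + (257519158/243)*w) + u * (((96009/2) + (63497654/243)*w) + u * (((38681/6) + (23189837/486)*w) + u * (((578) + (3048317/486)*w) + u * (((31) + (15176/27)*w) + u * (((3/4) + (277/9)*w) + u * ((0) + (7/9)*w))))))))))))))) by (clear E hx; clearbody x; clear x; hp).
  rewrite E, hw2, Rminus_diag, Rmult_0_l, Rplus_0_r. exact P.
Qed.

Lemma sg_4_1_p (u w : R) (hu : 0 <= u) (hw2 : w * w = 3)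
  (hwl : 17320508/10000000 < w) (hwu : w < 17320509/10000000) :
  let x := 3 + u in 0 < x^16 * Fs x (e4 x w (1/2)).
Proof.
  intro x.
  assert (hx : x <> 0) by (unfold x; lra).
  assert (E : x^16 * Fs x (e4 x w (1/2)) = (((1374362449/144) + (-12380302/9)*w) + u * (((4433364835/108) + (-204012221/36)*w) + u * (((2203959224/27) + (-1174536157/108)*w) + u * (((96570265363/972) + (-12510819037/972)*w) + u * (((240769015753/2916) + (-848720459/81)*w) + u * (((12021696646/243) + (-3009339977/486)*w) + u * (((3561367031/162) + (-2654284837/972)*w) + u * (((396079415/54) + (-220909555/243)*w) + u * (((33070975/18) + (-55458757/243)*w) + u * (((6141743/18) + (-20716211/486)*w) + u * (((136982/3) + (-2794807/486)*w) + u * (((4169) + (-14312/27)*w) + u * (((931/4) + (-269/9)*w) + u * ((6) + (-7/9)*w)))))))))))))) + (w * w - 3) * ((131405032/27) + (-641094784/27)*w^1 + (3748096/81)*w^2 + (1694900218/81)*u^1 + (-3373660048/27)*u^1*w^1 + (44125312/243)*u^1*w^2 + (26941716943/648)*u^2 + (-24993260578/81)*u^2*w^1 + (79245320/243)*u^2*w^2 + (147398305147/2916)*u^3 + (-1383997659337/2916)*u^3*w^1 + (775103890/2187)*u^3*w^2 + (1467956183479/34992)*u^4 + (-494710705259/972)*u^4*w^1 + (27251106001/104976)*u^4*w^2 + (73180186687/2916)*u^5 + (-1176458991463/2916)*u^5*w^1 + (295251775/2187)*u^5*w^2 + (21641837891/1944)*u^6 + (-356541396257/1458)*u^6*w^1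 + (149049619/2916)*u^6*w^2 + (1201251787/324)*u^7 + (-337118398699/2916)*u^7*w^1 + (3449635/243)*u^7*w^2 + (200219581/216)*u^8 + (-62813680499/1458)*u^8*w^1 + (1859963/648)*u^8*w^2 + (18556243/108)*u^9 + (-37023618703/2916)*u^9*w^1 + (11125/27)*u^9*w^2 + (826169/36)*u^10 + (-4300113025/1458)*u^10*w^1 + (1435/36)*u^10*w^2 + (4183/2)*u^11 + (-43278374/81)*u^11*w^1 + (7/3)*u^11*w^2 + (1865/16)*u^12 + (-7992077/108)*u^12*w^1 + (1/16)*u^12*w^2 + (3)*u^13 + (-409021/54)*u^13*w^1 + (-1621/3)*u^14*w^1 + (-24)*u^15*w^1 + (-1/2)*u^16*w^1)).
  { unfold x, Fs, e1, e2, e3, e4. field; unfold x in hx; lra. }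
  assert (P : 0 < (((1374362449/144) + (-12380302/9)*w) + u * (((4433364835/108) + (-204012221/36)*w) + u * (((2203959224/27) + (-1174536157/108)*w) + u * (((96570265363/972) + (-12510819037/972)*w) + u * (((240769015753/2916) + (-848720459/81)*w) + u * (((12021696646/243) + (-3009339977/486)*w) + u * (((3561367031/162) + (-2654284837/972)*w) + u * (((396079415/54) + (-220909555/243)*w) + u * (((33070975/18) + (-55458757/243)*w) + u * (((6141743/18) + (-20716211/486)*w) + u * (((136982/3) + (-2794807/486)*w) + u * (((4169) + (-14312/27)*w) + u * (((931/4) + (-269/9)*w) + u * ((6) + (-7/9)*w))))))))))))))) by (clear E hx; clearbody x; clear x; hp).
  rewrite E, hw2, Rminus_diag, Rmult_0_l, Rplus_0_r. exact P.
Qed.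

Lemma sg_4_1_n (u w : R) (hu : 0 <= u) (hw2 : w * w = 3)
  (hwl : 17320508/10000000 < w) (hwu : w < 17320509/10000000) :
  let x := - (3 + u) in 0 < - (x^16 * Fs x (e4 x w (1/2))).
Proof.
  intro x.
  assert (hx : x <> 0) by (unfold x; lra).
  assert (E : - (x^16 * Fs x (e4 x w (1/2))) = (((1474099175/144) + (-19526465/18)*w) + u * (((4780058663/108) + (-181208669/36)*w) + u * (((4764783023/54) + (-1143008941/108)*w) + u * (((104401857899/972) + (-13028634541/972)*w) + u * (((259762264943/2916) + (-926773097/81)*w) + u * (((12918627682/243) + (-3385587335/486)*w) + u * (((3805524523/162) + (-3030423059/972)*w) + u * (((420247511/54) + (-252707515/243)*w) + u * (((34799843/18) + (-62900198/243)*w) + u * (((6403463/18) + (-23101871/486)*w) + u * (((141406/3) + (-3045401/486)*w) + u * (((4259) + (-15176/27)*w) + u * (((941/4) + (-277/9)*w) + u * ((6) + (-7/9)*w)))))))))))))) + (w * w - 3) * ((276008425/54) + (598792250/27)*w^1 + (-1500625/81)*w^2 + (3573322165/162)*u^1 + (3192030275/27)*u^1*w^1 + (-19122250/243)*u^1*w^2 + (28451670449/648)*u^2 + (47825264095/162)*u^2*w^1 + (-74295025/486)*u^2*w^2 + (155672617925/2916)*u^3 + (1336812380711/2916)*u^3*w^1 + (-785564045/4374)*u^3*w^2 + (1548122640473/34992)*u^4 + (481693440517/972)*u^4*w^1 + (-14919636481/104976)*u^4*w^2 + (76961412217/2916)*u^5 + (1153170315845/2916)*u^5*w^1 + (-174547118/2187)*u^5*w^2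 + (22670047201/1944)*u^6 + (175696808413/729)*u^6*w^1 + (-95099443/2916)*u^6*w^2 + (1252095091/324)*u^7 + (333702148805/2916)*u^7*w^1 + (-2374355/243)*u^7*w^2 + (207488519/216)*u^8 + (31194133021/729)*u^8*w^1 + (-1380443/648)*u^8*w^2 + (19106143/108)*u^9 + (36866534921/2916)*u^9*w^1 + (-8900/27)*u^9*w^2 + (844753/36)*u^10 + (4289664565/1458)*u^10*w^1 + (-1237/36)*u^10*w^2 + (2123)*u^11 + (43225684/81)*u^11*w^1 + (-13/6)*u^11*w^2 + (1879/16)*u^12 + (7988177/108)*u^12*w^1 + (-1/16)*u^12*w^2 + (3)*u^13 + (408971/54)*u^13*w^1 + (1621/3)*u^14*w^1 + (24)*u^15*w^1 + (1/2)*u^16*w^1)).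
  { unfold x, Fs, e1, e2, e3, e4. field; unfold x in hx; lra. }
  assert (P : 0 < (((1474099175/144) + (-19526465/18)*w) + u * (((4780058663/108) + (-181208669/36)*w) + u * (((4764783023/54) + (-1143008941/108)*w) + u * (((104401857899/972) + (-13028634541/972)*w) + u * (((259762264943/2916) + (-926773097/81)*w) + u * (((12918627682/243) + (-3385587335/486)*w) + u * (((3805524523/162) + (-3030423059/972)*w) + u * (((420247511/54) + (-252707515/243)*w) + u * (((34799843/18) + (-62900198/243)*w) + u * (((6403463/18) + (-23101871/486)*w) + u * (((141406/3) + (-3045401/486)*w) + u * (((4259) + (-15176/27)*w) + u * (((941/4) + (-277/9)*w) + u * ((6) + (-7/9)*w))))))))))))))) by (clear E hx; clearbody x; clear x; hp).
  rewrite E, hw2, Rminus_diag, Rmult_0_l, Rplus_0_r. exact P.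
Qed.

Lemma ivt_th (g : R -> R) lo hi : continuity g -> lo <= hi -> g lo * g hi <= 0 ->
  exists th, lo <= th <= hi /\ g th = 0.
Proof. intros H H0 H1. destruct (IVT_cor g lo hi H H0 H1) as [z [Hz Hg]]. eauto. Qed.

Lemma cont_g (x b c : R) : continuity (fun th => Fs x (b + th * c)).
Proof. unfold Fs. reg. Qed.

Lemma sgnF (A B P : R) : 0 < P ->
  (0 < P * A /\ 0 < - (P * B)) \/ (0 < - (P * A) /\ 0 < P * B) -> A * B <= 0.
Proof.
  intros HP [[H1 H2]|[H1 H2]].
  - assert (0 < A) by nra. assert (B < 0) by nra. nra.
  - assert (A < 0) by nra. assert (0 < B) by nra. nra.
Qed.

Lemma x16pos (x : R) : x <> 0 -> 0 < x ^ 16.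
Proof. intro. replace (x^16) with ((x*x)^8) by ring. apply pow_lt.
  destruct (Rlt_or_le 0 x); nra. Qed.

Section W.
Variable x w : R.
Hypothesis hx : 3 <= x \/ x <= -3.
Hypothesis hw2 : w * w = 3.
Hypothesis hwl : 17320508/10000000 < w.
Hypothesis hwu : w < 17320509/10000000.

Lemma xnz : x <> 0. Proof. lra. Qed.

Lemma root1 : exists th, 1 <= th <= 2 /\ Fs x (e1 x th) = 0.
Proof.
  assert (Hf : forall th, e1 x th = e1 x 0 + th * / x ^ 4) by (intro; unfold e1; ring).
  destruct (ivt_th (fun th => Fs x (e1 x 0 + th * / x ^ 4)) 1 2) as [th [Hth Hg]].
  - apply cont_g.
  - lra.
  - cbv beta. rewrite <- !Hf. apply (sgnF _ _ (x ^ 16)). apply x16pos, xnz.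
    destruct hx as [Hx|Hx].
    + left. split.
      * pose proof (sg_1_0_p (x - 3) w ltac:(lra) hw2 hwl hwu) as HH; cbv zeta in HH;
        replace (3 + (x - 3)) with x in HH by ring. exact HH.
      * pose proof (sg_1_1_p (x - 3) w ltac:(lra) hw2 hwl hwu) as HH; cbv zeta in HH;
        replace (3 + (x - 3)) with x in HH by ring. exact HH.
    + right. split.
      * pose proof (sg_1_0_n (- x - 3) w ltac:(lra) hw2 hwl hwu) as HH; cbv zeta in HH;
        replace (- (3 + (- x - 3))) with x in HH by ring. exact HH.
      * pose proof (sg_1_1_n (- x - 3) w ltac:(lra) hw2 hwl hwu) as HH; cbv zeta in HH;
        replace (- (3 + (- x - 3))) with x in HH by ring. exact HH.
  - exists th. split; [exact Hth|]. rewrite Hf. exact Hg.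
Qed.
Lemma root2 : exists th, (-3/2) <= th <= (-1/2) /\ Fs x (e2 x w th) = 0.
Proof.
  assert (Hf : forall th, e2 x w th = e2 x w 0 + th * / x ^ 4) by (intro; unfold e2; ring).
  destruct (ivt_th (fun th => Fs x (e2 x w 0 + th * / x ^ 4)) (-3/2) (-1/2)) as [th [Hth Hg]].
  - apply cont_g.
  - lra.
  - cbv beta. rewrite <- !Hf. apply (sgnF _ _ (x ^ 16)). apply x16pos, xnz.
    destruct hx as [Hx|Hx].
    + right. split.
      * pose proof (sg_2_0_p (x - 3) w ltac:(lra) hw2 hwl hwu) as HH; cbv zeta in HH;
        replace (3 + (x - 3)) with x in HH by ring. exact HH.
      * pose proof (sg_2_1_p (x - 3) w ltac:(lra) hw2 hwl hwu) as HH; cbv zeta in HH;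
        replace (3 + (x - 3)) with x in HH by ring. exact HH.
    + left. split.
      * pose proof (sg_2_0_n (- x - 3) w ltac:(lra) hw2 hwl hwu) as HH; cbv zeta in HH;
        replace (- (3 + (- x - 3))) with x in HH by ring. exact HH.
      * pose proof (sg_2_1_n (- x - 3) w ltac:(lra) hw2 hwl hwu) as HH; cbv zeta in HH;
        replace (- (3 + (- x - 3))) with x in HH by ring. exact HH.
  - exists th. split; [exact Hth|]. rewrite Hf. exact Hg.
Qed.
Lemma root3 : exists th, 0 <= th <= 1 /\ Fs x (e3 x th) = 0.
Proof.
  assert (Hf : forall th, e3 x th = e3 x 0 + th * (- / x ^ 4)) by (intro; unfold e3; ring).
  destruct (ivt_th (fun th => Fs x (e3 x 0 + th * (- / x ^ 4))) 0 1) as [th [Hth Hg]].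
  - apply cont_g.
  - lra.
  - cbv beta. rewrite <- !Hf. apply (sgnF _ _ (x ^ 16)). apply x16pos, xnz.
    destruct hx as [Hx|Hx].
    + right. split.
      * pose proof (sg_3_0_p (x - 3) w ltac:(lra) hw2 hwl hwu) as HH; cbv zeta in HH;
        replace (3 + (x - 3)) with x in HH by ring. exact HH.
      * pose proof (sg_3_1_p (x - 3) w ltac:(lra) hw2 hwl hwu) as HH; cbv zeta in HH;
        replace (3 + (x - 3)) with x in HH by ring. exact HH.
    + left. split.
      * pose proof (sg_3_0_n (- x - 3) w ltac:(lra) hw2 hwl hwu) as HH; cbv zeta in HH;
        replace (- (3 + (- x - 3))) with x in HH by ring. exact HH.
      * pose proof (sg_3_1_n (- x - 3) w ltac:(lra) hw2 hwl hwu) as HH; cbv zeta in HH;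
        replace (- (3 + (- x - 3))) with x in HH by ring. exact HH.
  - exists th. split; [exact Hth|]. rewrite Hf. exact Hg.
Qed.
Lemma root4 : exists th, (-1/2) <= th <= (1/2) /\ Fs x (e4 x w th) = 0.
Proof.
  assert (Hf : forall th, e4 x w th = e4 x w 0 + th * / x ^ 4) by (intro; unfold e4; ring).
  destruct (ivt_th (fun th => Fs x (e4 x w 0 + th * / x ^ 4)) (-1/2) (1/2)) as [th [Hth Hg]].
  - apply cont_g.
  - lra.
  - cbv beta. rewrite <- !Hf. apply (sgnF _ _ (x ^ 16)). apply x16pos, xnz.
    destruct hx as [Hx|Hx].
    + right. split.
      * pose proof (sg_4_0_p (x - 3) w ltac:(lra) hw2 hwl hwu) as HH; cbv zeta in HH;
        replace (3 + (x - 3)) with x in HH by ring. exact HH.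
      * pose proof (sg_4_1_p (x - 3) w ltac:(lra) hw2 hwl hwu) as HH; cbv zeta in HH;
        replace (3 + (x - 3)) with x in HH by ring. exact HH.
    + left. split.
      * pose proof (sg_4_0_n (- x - 3) w ltac:(lra) hw2 hwl hwu) as HH; cbv zeta in HH;
        replace (- (3 + (- x - 3))) with x in HH by ring. exact HH.
      * pose proof (sg_4_1_n (- x - 3) w ltac:(lra) hw2 hwl hwu) as HH; cbv zeta in HH;
        replace (- (3 + (- x - 3))) with x in HH by ring. exact HH.
  - exists th. split; [exact Hth|]. rewrite Hf. exact Hg.
Qed.
End W.

Lemma quad_fact a b r1 r2 : r1 <> r2 -> r1^2 + a*r1 + b = 0 -> r2^2 + a*r2 + b = 0 ->
  forall t, t^2 + a*t + b = (t - r1) * (t - r2).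
Proof.
  intros Hne H1 H2.
  assert (E : (r1 - r2) * (r1 + r2 + a) = 0) by (replace 0 with ((r1^2 + a*r1 + b) - (r2^2 + a*r2 + b)) by (rewrite H1, H2; ring); ring).
  apply Rmult_integral in E. destruct E as [E|E]; [exfalso; apply Hne; lra|].
  assert (Ha : a = - (r1 + r2)) by lra. subst a.
  assert (Hb : b = r1 * r2) by nra. subst b. intro; ring.
Qed.

Lemma cub_fact a b c r1 r2 r3 : r1 <> r2 -> r1 <> r3 -> r2 <> r3 ->
  r1^3 + a*r1^2 + b*r1 + c = 0 -> r2^3 + a*r2^2 + b*r2 + c = 0 -> r3^3 + a*r3^2 + b*r3 + c = 0 ->
  forall t, t^3 + a*t^2 + b*t + c = (t - r1) * (t - r2) * (t - r3).
Proof.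
  intros n12 n13 n23 H1 H2 H3.
  assert (Id : forall t, t^3 + a*t^2 + b*t + c = (t - r1) * (t^2 + (a + r1)*t + (b + r1*(a+r1))) + (r1^3 + a*r1^2 + b*r1 + c)) by (intro; ring).
  assert (Q2 : r2^2 + (a + r1)*r2 + (b + r1*(a+r1)) = 0).
  { pose proof (Id r2) as E. rewrite H2, H1, Rplus_0_r in E.
    symmetry in E. apply Rmult_integral in E. destruct E; [exfalso; apply n12; lra|auto]. }
  assert (Q3 : r3^2 + (a + r1)*r3 + (b + r1*(a+r1)) = 0).
  { pose proof (Id r3) as E. rewrite H3, H1, Rplus_0_r in E.
    symmetry in E. apply Rmult_integral in E. destruct E; [exfalso; apply n13; lra|auto]. }
  intro t. rewrite Id, H1, Rplus_0_r, (quad_fact _ _ _ _ n23 Q2 Q3). ring.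
Qed.

Lemma quart_fact a b c d r1 r2 r3 r4 : r1 <> r2 -> r1 <> r3 -> r1 <> r4 -> r2 <> r3 -> r2 <> r4 -> r3 <> r4 ->
  r1^4 + a*r1^3 + b*r1^2 + c*r1 + d = 0 -> r2^4 + a*r2^3 + b*r2^2 + c*r2 + d = 0 ->
  r3^4 + a*r3^3 + b*r3^2 + c*r3 + d = 0 -> r4^4 + a*r4^3 + b*r4^2 + c*r4 + d = 0 ->
  forall t, t^4 + a*t^3 + b*t^2 + c*t + d = (t - r1) * (t - r2) * (t - r3) * (t - r4).
Proof.
  intros n12 n13 n14 n23 n24 n34 H1 H2 H3 H4.
  assert (Id : forall t, t^4 + a*t^3 + b*t^2 + c*t + d = (t - r1) * (t^3 + (a + r1)*t^2 + (b + r1*(a+r1))*t + (c + r1*(b + r1*(a+r1)))) + (r1^4 + a*r1^3 + b*r1^2 + c*r1 + d)) by (intro; ring).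
  assert (G : forall r, r1 <> r -> r^4 + a*r^3 + b*r^2 + c*r + d = 0 ->
     r^3 + (a + r1)*r^2 + (b + r1*(a+r1))*r + (c + r1*(b + r1*(a+r1))) = 0).
  { intros r nr Hr. pose proof (Id r) as E. rewrite Hr, H1, Rplus_0_r in E.
    symmetry in E. apply Rmult_integral in E. destruct E; [exfalso; apply nr; lra|auto]. }
  intro t. rewrite Id, H1, Rplus_0_r, (cub_fact _ _ _ _ _ _ n23 n24 n34 (G _ n12 H2) (G _ n13 H3) (G _ n14 H4)). ring.
Qed.

Section D.
Variable x w th1 th2 th3 th4 : R.
Hypothesis hx : 3 <= x \/ x <= -3.
Hypothesis hwl : 17320508/10000000 < w.
Hypothesis hwu : w < 17320509/10000000.
Hypothesis h1 : 1 <= th1 <= 2.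
Hypothesis h2 : -3/2 <= th2 <= -1/2.
Hypothesis h3 : 0 <= th3 <= 1.
Hypothesis h4 : -1/2 <= th4 <= 1/2.

Lemma xnz' : x <> 0. Proof. lra. Qed.

Lemma ybnd : -1/3 <= / x <= 1/3 /\ / x <> 0.
Proof.
  split; [|apply Rinv_neq_0_compat; lra].
  destruct hx as [H|H].
  - assert (0 < / x) by (apply Rinv_0_lt_compat; lra).
    assert (/ x <= / 3) by (apply Rinv_le_contravar; lra). lra.
  - assert (0 < / - x) by (apply Rinv_0_lt_compat; lra).
    assert (/ - x <= / 3) by (apply Rinv_le_contravar; lra).
    rewrite Rinv_opp in *. lra.
Qed.

Lemma nz_of (y b : R) : y <> 0 -> 0 < b -> y * b <> 0.
Proof. intros Hy Hb E. apply Rmult_integral in E. lra. Qed.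

Lemma d23 : e2 x w th2 <> e3 x th3.
Proof.
  destruct ybnd as [[yl yu] ynz]. set (y := / x) in *.
  assert (E : e2 x w th2 - e3 x th3 = y * (w/2 + y*(w/6) - y^2*(w/9) + (th2+th3)*y^3)).
  { unfold e2, e3, y. field. apply xnz'. }
  intro C. apply (nz_of y (w/2 + y*(w/6) - y^2*(w/9) + (th2+th3)*y^3) ynz).
  - assert (0 <= y^2 <= 1/9) by nra. assert (-1/27 <= y^3 <= 1/27) by nra. nra.
  - rewrite <- E. lra.
Qed.

Lemma d34 : e3 x th3 <> e4 x w th4.
Proof.
  destruct ybnd as [[yl yu] ynz]. set (y := / x) in *.
  assert (E : e3 x th3 - e4 x w th4 = y * (w/2 + y*(w/6) - y^2*(w/9) - (th3+th4)*y^3)).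
  { unfold e4, e3, y. field. apply xnz'. }
  intro C. apply (nz_of y (w/2 + y*(w/6) - y^2*(w/9) - (th3+th4)*y^3) ynz).
  - assert (0 <= y^2 <= 1/9) by nra. assert (-1/27 <= y^3 <= 1/27) by nra. nra.
  - rewrite <- E. lra.
Qed.

Lemma d24 : e2 x w th2 <> e4 x w th4.
Proof.
  destruct ybnd as [[yl yu] ynz]. set (y := / x) in *.
  assert (E : e2 x w th2 - e4 x w th4 = y * (w + y*(w/3) - y^2*(2*w/9) + (th2-th4)*y^3)).
  { unfold e4, e2, y. field. apply xnz'. }
  intro C. apply (nz_of y (w + y*(w/3) - y^2*(2*w/9) + (th2-th4)*y^3) ynz).
  - assert (0 <= y^2 <= 1/9) by nra. assert (-1/27 <= y^3 <= 1/27) by nra. nra.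
  - rewrite <- E. lra.
Qed.

Lemma r1y : e1 x th1 * / x < -20.
Proof.
  destruct ybnd as [[yl yu] ynz].
  assert (E : e1 x th1 * / x = -4*x^2 + 4*x - 8 + 4 * / x - 3/2 * (/x)^2 - 3/2 * (/x)^3 + th1 * (/x)^5).
  { unfold e1. field. apply xnz'. }
  rewrite E. set (y := / x) in *.
  assert (-4*x^2 + 4*x - 8 <= -32) by (destruct hx; nra).
  assert (0 <= y^2 <= 1/9) by nra. assert (-1/27 <= y^3 <= 1/27) by nra.
  assert (-1/243 <= y^5 <= 1/243) by nra. nra.
Qed.

Lemma small_y (r a b c th : R) : r = a * / x + b * / x^2 + c * / x^3 + th * / x^4 ->
  -2 <= a <= 2 -> -2 <= b <= 2 -> -2 <= c <= 2 -> -2 <= th <= 2 -> -1 <= r * / x.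
Proof.
  intros Hr ha hb hc ht. destruct ybnd as [[yl yu] ynz].
  assert (E : r * / x = (/x)^2 * (a + b * /x + c * (/x)^2 + th * (/x)^3)).
  { rewrite Hr. field. apply xnz'. }
  rewrite E. set (y := / x) in *.
  assert (0 <= y^2 <= 1/9) by nra. assert (-1/27 <= y^3 <= 1/27) by nra.
  assert (-1 <= b*y <= 1) by nra. assert (-1 <= c*y^2 <= 1) by nra. assert (-2 <= th*y^3 <= 2) by nra.
  nra.
Qed.

Lemma dne1 (r a b c th : R) : r = a * / x + b * / x^2 + c * / x^3 + th * / x^4 ->
  -2 <= a <= 2 -> -2 <= b <= 2 -> -2 <= c <= 2 -> -2 <= th <= 2 -> e1 x th1 <> r.
Proof.
  intros. pose proof (small_y r a b c th H H0 H1 H2 H3). pose proof r1y. intro C. rewrite C in *. lra.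
Qed.
End D.

Theorem mainTheorem3 (s : Z) (hs : (3 <= Z.abs s)%Z) :
  let x := IZR s in
  exists r1 r2 r3 r4 th1 th2 th3 th4 : R,
    (forall t : R, Fs x t = (t - r1) * (t - r2) * (t - r3) * (t - r4)) /\
    r1 = - 4 * x ^ 3 + 4 * x ^ 2 - 8 * x + 4 - 3 / 2 * / x - 3 / 2 * / x ^ 2
         + th1 * / x ^ 4 /\ 1 <= th1 <= 2 /\
    r2 = (1 + sqrt 3) / 2 * / x + (3 + sqrt 3) / 6 * / x ^ 2
         - 1 / (3 * sqrt 3) * / x ^ 3 + th2 * / x ^ 4 /\ - 3 / 2 <= th2 <= - 1 / 2 /\
    r3 = 1 / 2 * / x + 1 / 2 * / x ^ 2 - th3 * / x ^ 4 /\ 0 <= th3 <= 1 /\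
    r4 = (1 - sqrt 3) / 2 * / x + (3 - sqrt 3) / 6 * / x ^ 2
         + 1 / (3 * sqrt 3) * / x ^ 3 + th4 * / x ^ 4 /\ - 1 / 2 <= th4 <= 1 / 2.
Proof.
  intro x.
  assert (hx : 3 <= x \/ x <= -3).
  { unfold x. destruct (Z_lt_le_dec s 0) as [H|H].
    - right. replace (-3) with (IZR (-3)) by reflexivity. apply IZR_le. lia.
    - left. replace 3 with (IZR 3) by reflexivity. apply IZR_le. lia. }
  set (w := sqrt 3).
  assert (hw2 : w * w = 3) by (apply sqrt_sqrt; lra).
  assert (hw0 : 0 <= w) by apply sqrt_pos.
  assert (hwl : 17320508/10000000 < w) by nra.
  assert (hwu : w < 17320509/10000000) by nra.
  assert (Hq : 1 / (3 * w) = w / 9) by (field_simplify_eq; [lra| lra]).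
  destruct (root1 x w hx hw2 hwl hwu) as [t1 [h1 F1]].
  destruct (root2 x w hx hw2 hwl hwu) as [t2 [h2 F2]].
  destruct (root3 x w hx hw2 hwl hwu) as [t3 [h3 F3]].
  destruct (root4 x w hx hw2 hwl hwu) as [t4 [h4 F4]].
  exists (e1 x t1), (e2 x w t2), (e3 x t3), (e4 x w t4), t1, t2, t3, t4.
  split.
  { intro t. unfold Fs. apply quart_fact.
    - apply (dne1 x w t1 hx hwl hwu h1 _ ((1+w)/2) ((3+w)/6) (-(w/9)) t2); [unfold e2; ring|lra..].
    - apply (dne1 x w t1 hx hwl hwu h1 _ (1/2) (1/2) 0 (-t3)); [unfold e3; ring|lra..].
    - apply (dne1 x w t1 hx hwl hwu h1 _ ((1-w)/2) ((3-w)/6) (w/9) t4); [unfold e4; ring|lra..].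
    - exact (d23 x w t2 t3 hx hwl hwu h2 h3).
    - exact (d24 x w t2 t4 hx hwl hwu h2 h4).
    - exact (d34 x w t3 t4 hx hwl hwu h3 h4).
    - exact F1.
    - exact F2.
    - exact F3.
    - exact F4. }
  split; [reflexivity|]. split; [exact h1|].
  split; [unfold e2; fold w; rewrite Hq; reflexivity|]. split; [exact h2|].
  split; [reflexivity|]. split; [exact h3|].
  split; [unfold e4; fold w; rewrite Hq; reflexivity|]. exact h4.
Qed.
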